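(* Let $G$ and $H$ be finite, simple, connected graphs, each of order at least $4$. If $G$ is outerplanar, $P(G)=2$, and $\gamma(H)=1$, then $\gamma_P(G\,\Box\, H)=2$.
   Context: The Cartesian product $G\,\Box\,H$ has vertex set $V(G)\times V(H)$, with $(g,h)$ adjacent to $(g',h')$ iff either $g=g'$ and $hh'\in E(H)$, or $h=h'$ and $gg'\in E(G)$. A graph is outerplanar if it has a crossing-free plane embedding with all vertices on one face. $P(G)$ is the least number of vertex-disjoint induced paths covering $V(G)$. $\gamma(H)$ is the domination number. For $U\subseteq V$, $cl(U)$ is obtained by coloring $U$ black and repeatedly applying: if a black vertex has exactly one white neighbor, that neighbor becomes black. $S$ is a power dominating set if $cl(N[S])$ is the whole vertex set; $\gamma_P$ is the minimum size of a power dominating set. *)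

(* Defs.v *)
From mathcomp Require Import all_boot.
Set Implicit Arguments. Unset Strict Implicit. Unset Printing Implicit Defensive.

Section Graphs.
Variable T : finType.
Implicit Types (e : rel T) (S U B : {set T}).

Definition simple_graph e : Prop := symmetric e /\ irreflexive e.

Definition connected_graph e : Prop := forall x y : T, connect e x y.

Definition closed_nbhd e S : {set T} :=
  [set x | (x \in S) || [exists y in S, e y x]].

(* one round of the zero-forcing (propagation) rule, applied to all black
   vertices having exactly one white neighbour *)
Definition force_step e U : {set T} :=
  U :|: [set w | [exists v in U,
           e v w && (#|[set u | e v u & u \notin U]| == 1)]].

(* cl(U): the rule applied until stabilisation (#|T| rounds suffice) *)
Definition cl e U : {set T} := iter #|T| (force_step e) U.

Definition dominating e S : bool := closed_nbhd e S == [set: T].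
Definition power_dominating e S : bool := cl e (closed_nbhd e S) == [set: T].

Definition domination_number e : nat :=
  #|[arg min_(S < [set: T] | dominating e S) #|S|]|.
Definition power_domination_number e : nat :=
  #|[arg min_(S < [set: T] | power_dominating e S) #|S|]|.

(* B induces a path in G: its vertices can be listed as a duplicate-free
   sequence s such that two vertices of B are adjacent iff consecutive in s *)
Definition induced_path e B : bool :=
  [exists s : (#|B|).-tuple T,
    [&& uniq s, [forall x, (x \in B) == (x \in s)] &
        [forall x in s, forall y in s,
          e x y == ((index y s == (index x s).+1) ||
                    (index x s == (index y s).+1))]]].

Definition induced_path_partition e (P : {set {set T}}) : bool :=
  partition P [set: T] && [forall B in P, induced_path e B].

Definition path_cover_number e : nat :=
  #|[arg min_(P < [set [set x] | x : T] | induced_path_partition e P) #|P|]|.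

(* outerplanar: drawing with all vertices on a circle (in the cyclic order
   given by f) and edges as non-crossing chords *)
Definition outerplanar e : Prop :=
  exists f : T -> nat, injective f /\
    forall a b c d : T, e a b -> e c d -> ~ (f a < f c < f b /\ f b < f d).

End Graphs.

Definition cart_prod (T1 T2 : finType) (e1 : rel T1) (e2 : rel T2) : rel (T1 * T2) :=
  fun x y => ((x.1 == y.1) && e2 x.2 y.2) || ((x.2 == y.2) && e1 x.1 y.1).

(* Main.v *)
Require Import Defs.
From mathcomp Require Import all_boot zify.
From Stdlib Require Import Classical.
Set Implicit Arguments. Unset Strict Implicit. Unset Printing Implicit Defensive.

Section Forts.
Variable T : finType.
Variable e : rel T.

Definition fort (F : {set T}) : Prop :=
  F != set0 /\ forall v, v \notin F -> #|[set u in F | e v u]| != 1.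

Definition dis (F U : {set T}) : Prop := forall x, x \in F -> x \notin U.

Lemma fs_sub (U : {set T}) : U \subset force_step e U.
Proof. exact: subsetUl. Qed.

Lemma fort_step (F U : {set T}) : fort F -> dis F U -> dis F (force_step e U).
Proof.
move=> [_ HF] hd x xF; rewrite /force_step !inE negb_or (hd x xF) /=.
apply/negP => /existsP [v /andP [vU /andP [evx /eqP c1]]].
have vF : v \notin F by apply/negP => /hd; rewrite vU.
have := HF v vF; apply/negP; rewrite negbK.
have sub : [set u in F | e v u] \subset [set u | e v u & u \notin U].
  apply/subsetP => u; rewrite !inE => /andP [uF evu]; by rewrite evu (hd u uF).
have le1 := subset_leq_card sub; rewrite c1 in le1.
have gt0 : 0 < #|[set u in F | e v u]|.
  by apply/card_gt0P; exists x; rewrite inE xF evx.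
by apply/eqP; lia.
Qed.

Lemma iter_sub (U : {set T}) k : U \subset iter k (force_step e) U.
Proof.
elim: k => [|k IH] /=; first exact: subxx.
exact: subset_trans IH (fs_sub _).
Qed.

Lemma fort_cl (F U : {set T}) : fort F -> dis F U -> cl e U != setT.
Proof.
move=> hF hd.
have hk : forall k, dis F (iter k (force_step e) U).
  elim=> [|k IH] //=; exact: fort_step.
case: hF => /set0Pn [x xF] _.
apply/negP => /eqP hc; have := hk #|T| x xF; rewrite -/(cl e U) hc inE; done.
Qed.

Lemma iter_fix (U : {set T}) k : force_step e (iter k (force_step e) U) = iter k (force_step e) U
   \/ k <= #|iter k (force_step e) U|.
Proof.
elim: k => [|k IH]; first by right.
case: IH => [H|H].
  by left; rewrite /= H H.
have [E|NE] := eqVneq (force_step e (iter k (force_step e) U)) (iter k (force_step e) U).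
  by left; rewrite /= E E.
right; rewrite /=.
have pr : iter k (force_step e) U \proper force_step e (iter k (force_step e) U).
  by rewrite properEneq eq_sym NE fs_sub.
have := proper_card pr; lia.
Qed.

Lemma cl_fix (U : {set T}) : force_step e (cl e U) = cl e U.
Proof.
case: (iter_fix U #|T|) => // H.
have : cl e U = setT.
  apply/eqP; rewrite eqEcard subsetT cardsT; exact: H.
move=> ->; apply/eqP; rewrite eqEsubset subsetT fs_sub //.
Qed.

Lemma cl_fort (U : {set T}) : cl e U != setT -> exists F, fort F /\ dis F U.
Proof.
move=> hne; exists (~: cl e U); split; last first.
  move=> x; rewrite inE => /negP hx; apply/negP => xU; apply: hx.
  by apply: (subsetP (iter_sub U #|T|)).
split.
  apply/negP => /eqP h; move/negP: hne; apply; apply/eqP.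
  by rewrite -[cl e U]setCK h setC0.
move=> v; rewrite inE negbK => vX; apply/negP => /eqP c1.
have /cards1P [w hw] : #|[set u in ~: cl e U | e v u]| == 1 by rewrite c1.
have : w \in force_step e (cl e U).
  rewrite /force_step inE; apply/orP; right; rewrite inE; apply/existsP; exists v.
  rewrite vX /=.
  have : w \in [set u in ~: cl e U | e v u] by rewrite hw inE.
  rewrite !inE => /andP [_ ->] /=.
  apply/eqP; rewrite -c1; apply: eq_card => u; rewrite !inE andbC //.
rewrite cl_fix => wX.
have : w \in [set u in ~: cl e U | e v u] by rewrite hw inE.
by rewrite !inE wX.
Qed.

End Forts.

Section Prod.
Variables (T1 T2 : finType) (eG : rel T1) (eH : rel T2).
Let eP := cart_prod eG eH.

Lemma prod_fort (A : {set T1}) (B : {set T2}) :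
  fort eG A -> fort eH B -> fort eP (setX A B).
Proof.
move=> [/set0Pn [a aA] hA] [/set0Pn [b bB] hB]; split.
  by apply/set0Pn; exists (a, b); rewrite inE aA bB.
move=> [x y]; rewrite inE /= negb_and => hxy.
case xA: (x \in A).
  have yB : y \notin B by move: hxy; rewrite xA.
  have -> : [set u in setX A B | eP (x, y) u] = setX [set x] [set y' in B | eH y y'].
    apply/setP => [[x' y']]; rewrite !inE /eP /cart_prod /=.
    case: (y =P y') => [<-|_]; first by rewrite (negbTE yB) !andbF.
    case: (x =P x') => [<-|nx]; first by rewrite xA eqxx /=; case: (y' \in B); case: (eH y y').
    have -> : (x' == x) = false by apply/eqP => h; apply: nx; rewrite h.
    by rewrite /= !andbF.
  by rewrite cardsX cards1 mul1n; apply: hB.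
case yB: (y \in B).
  have -> : [set u in setX A B | eP (x, y) u] = setX [set x' in A | eG x x'] [set y].
    apply/setP => [[x' y']]; rewrite !inE /eP /cart_prod /=.
    case: (x =P x') => [<-|_]; first by rewrite xA.
    case: (y =P y') => [<-|ny]; last first.
      have -> : (y' == y) = false by apply/eqP => h; apply: ny; rewrite h.
      by rewrite /= !andbF.
    by rewrite yB eqxx /= !andbT.
  by rewrite cardsX cards1 muln1; apply: hA; rewrite xA.
have -> : [set u in setX A B | eP (x, y) u] = set0.
  apply/setP => [[x' y']]; rewrite !inE /eP /cart_prod /=.
  case: (x =P x') => [<-|_]; first by rewrite xA.
  case: (y =P y') => [<-|_]; first by rewrite yB andbF.
  by rewrite /= andbF.
by rewrite cards0.
Qed.

Lemma proj_fort (F : {set T1 * T2}) (Z : {set T1}) :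
  fort eP F -> (forall x y, x \in Z -> (x, y) \notin F) ->
  exists A, fort eG A /\ dis A Z.
Proof.
move=> [/set0Pn [[a b] abF] hF] hZ.
exists [set x | [exists y, (x, y) \in F]]; split; last first.
  move=> x; rewrite inE => /existsP [y xyF]; apply/negP => xZ.
  by move: (hZ x y xZ); rewrite xyF.
split.
  by apply/set0Pn; exists a; rewrite inE; apply/existsP; exists b.
move=> x; rewrite inE negb_exists => /forallP hx.
apply/negP => /eqP c1.
have /cards1P [x' hx'] : #|[set x' in [set x0 | [exists y, (x0, y) \in F]] | eG x x']| == 1
  by rewrite c1.
have : x' \in [set x' in [set x0 | [exists y, (x0, y) \in F]] | eG x x'] by rewrite hx' inE.
rewrite !inE => /andP [/existsP [y x'yF] exx'].
have xyF : (x, y) \notin F by apply: hx.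
have := hF _ xyF; apply/negP; rewrite negbK.
have -> : [set u in F | eP (x, y) u] = [set (x', y)]; last by rewrite cards1.
apply/setP => [[x'' y'']]; rewrite !inE /eP /cart_prod /=.
case: (x =P x'') => [<-|nx].
  rewrite (negbTE (hx y'')) /=; apply/esym/negP => /eqP [] ex _.
  by move: x'yF; rewrite -ex (negbTE (hx y)).
case: (y =P y'') => [<-|ny]; last first.
  rewrite /= andbF; apply/esym/negP => /eqP [] _ hyy; by apply: ny.
rewrite /=.
case: (boolP ((x'', y) \in F)) => hin /=.
  case exx: (eG x x'').
    have : x'' \in [set x' in [set x0 | [exists y, (x0, y) \in F]] | eG x x'].
      by rewrite !inE exx andbT; apply/existsP; exists y.
    by rewrite hx' inE => /eqP ->; rewrite eqxx.
  apply/esym/negP => /eqP [] ex; by rewrite ex exx' in exx.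
apply/esym/negP => /eqP [] ex; by rewrite ex x'yF in hin.
Qed.

End Prod.

Section Parity.
Variable T : finType.
Variable e : rel T.
Hypothesis esym : symmetric e.
Hypothesis eirr : irreflexive e.
Variable f : T -> nat.
Hypothesis finj : injective f.
Hypothesis NC : forall a b c d : T, e a b -> e c d -> ~ (f a < f c < f b /\ f b < f d).

Definition sl x y := f x < f y.
Definition II a a' b b' := sl a b (+) sl a' b (+) sl a b' (+) sl a' b'.

Lemma sl_anti x y : x != y -> sl y x = ~~ sl x y.
Proof.
move=> nxy; rewrite /sl; have : f x != f y.
  by apply/negP => /eqP /finj h; rewrite h eqxx in nxy.
by case: (ltngtP (f x) (f y)); rewrite ?eqxx.
Qed.

Lemma II_add1 a x a' b b' : II a x b b' (+) II x a' b b' = II a a' b b'.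
Proof.
rewrite /II; case: (sl a b); case: (sl x b); case: (sl a b'); case: (sl x b');
  case: (sl a' b); case: (sl a' b') => //.
Qed.

Lemma II_add2 a a' b x b' : II a a' b x (+) II a a' x b' = II a a' b b'.
Proof.
rewrite /II; case: (sl a b); case: (sl a x); case: (sl a b'); case: (sl a' x);
  case: (sl a' b); case: (sl a' b') => //.
Qed.

Lemma II_refl1 a b b' : II a a b b' = false.
Proof. by rewrite /II; case: (sl a b); case: (sl a b'). Qed.

Lemma II_refl2 a a' b : II a a' b b = false.
Proof. by rewrite /II; case: (sl a b); case: (sl a' b). Qed.

Lemma II_four a b c d : b != c -> b != d -> c != d ->
  II a b c d (+) II a c b d (+) II a d b c = true.
Proof.
move=> bc bd cd; rewrite /II (sl_anti bc) (sl_anti bd) (sl_anti cd).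
case: (sl a b); case: (sl a c); case: (sl a d); case: (sl b c); case: (sl b d);
  case: (sl c d) => //.
Qed.

Lemma keyx (a b c d : nat) : a < b -> c < d -> a <> c -> a <> d -> b <> c -> b <> d ->
  ~ (a < c < b /\ b < d) -> ~ (c < a < d /\ d < b) ->
  (a < c) (+) (b < c) (+) (a < d) (+) (b < d) = false.
Proof.
move=> *; case: (ltnP a c); case: (ltnP b c); case: (ltnP a d); case: (ltnP b d) => //= *; exfalso; lia.
Qed.

Lemma II_swap1 u v w w' : II u v w w' = II v u w w'.
Proof. by rewrite /II; case: (sl u w); case: (sl v w); case: (sl u w'); case: (sl v w'). Qed.
Lemma II_swap2 u v w w' : II u v w w' = II u v w' w.
Proof. by rewrite /II; case: (sl u w); case: (sl v w); case: (sl u w'); case: (sl v w'). Qed.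

Lemma II_edge u v w w' : e u v -> e w w' ->
  u != w -> u != w' -> v != w -> v != w' -> II u v w w' = false.
Proof.
have d : forall x y, x != y -> f x <> f y.
  by move=> x y nxy /finj h; rewrite h eqxx in nxy.
have H : forall u v w w', e u v -> e w w' -> f u < f v -> f w < f w' ->
    u != w -> u != w' -> v != w -> v != w' -> II u v w w' = false.
  move=> u1 v1 w1 w1' e1 e2 l1 l2 a1 a2 a3 a4; rewrite /II /sl.
  apply: keyx => //; try exact: d.
    exact: NC e1 e2.
  exact: NC e2 e1.
move=> euv eww' uw uw' vw vw'.
have uv : u != v by apply/negP => /eqP h; rewrite h eirr in euv.
have ww : w != w' by apply/negP => /eqP h; rewrite h eirr in eww'.
have evu : e v u by rewrite esym.
have ew'w : e w' w by rewrite esym.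
case: (ltngtP (f u) (f v)) => [luv|luv|h]; last by exfalso; apply: (d _ _ uv).
  case: (ltngtP (f w) (f w')) => [lw|lw|h]; last by exfalso; apply: (d _ _ ww).
    exact: H.
  by rewrite II_swap2; apply: H.
case: (ltngtP (f w) (f w')) => [lw|lw|h]; last by exfalso; apply: (d _ _ ww).
  by rewrite II_swap1; apply: H.
by rewrite II_swap1 II_swap2; apply: H.
Qed.

Definition er (A : {set T}) := [rel x y | e x y && (x \in A) && (y \in A)].

Lemma er_sym A : symmetric (er A).
Proof. by move=> x y /=; rewrite esym -!andbA; congr (_ && _); rewrite andbC. Qed.

Lemma edge_conn (A : {set T}) u v w w' : e u v -> u \in A -> v \in A ->
  connect (er (~: A)) w w' -> II u v w w' = false.
Proof.
move=> euv uA vA /connectP [p pth ->]; elim: p w pth => [|w1 p IH] w /=.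
  by rewrite II_refl2.
move=> /andP [/andP [/andP [eww1 wA] w1A] pth].
rewrite -(II_add2 u v w w1 (last w1 p)) IH // addbF.
rewrite inE in wA; rewrite inE in w1A.
apply: II_edge => //; apply/negP => /eqP h; subst;
  by [rewrite uA in wA | rewrite uA in w1A | rewrite vA in wA | rewrite vA in w1A].
Qed.

Lemma DP (A : {set T}) a a' b b' : connect (er A) a a' ->
  connect (er (~: A)) b b' -> II a a' b b' = false.
Proof.
move=> /connectP [p pth ->] hb; elim: p a pth => [|a1 p IH] a /=.
  by rewrite II_refl1.
move=> /andP [/andP [/andP [eaa1 aA] a1A] pth].
by rewrite -(II_add1 a a1 (last a1 p)) IH // addbF; apply: edge_conn eaa1 aA a1A hb.
Qed.

Lemma DP_r (A : {set T}) a a' b b' : connect (er (~: A)) a a' ->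
  connect (er A) b b' -> II a a' b b' = false.
Proof. by move=> ha hb; apply: (DP ha); rewrite setCK. Qed.

End Parity.

Section Seqs.
Variable T : finType.
Variable e : rel T.
Hypothesis esym : symmetric e.
Hypothesis eirr : irreflexive e.
Variable f : T -> nat.
Hypothesis finj : injective f.
Hypothesis NC : forall a b c d : T, e a b -> e c d -> ~ (f a < f c < f b /\ f b < f d).
Variable x0 : T.

Definition ipath (s : seq T) : Prop := uniq s /\
  forall i j, i < size s -> j < size s ->
    e (nth x0 s i) (nth x0 s j) = (j == i.+1) || (i == j.+1).

Lemma seg_conn (s : seq T) (A : {set T}) i k : ipath s -> i <= k -> k < size s ->
  (forall t, i <= t <= k -> nth x0 s t \in A) ->
  connect (er e A) (nth x0 s i) (nth x0 s k).
Proof.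
move=> [us hs] ik ks hA; elim: k ik ks hA => [|k IH] ik ks hA.
  by have -> : i = 0 by lia.
case: (eqVneq i k.+1) => [<-|nik]; first exact: connect0.
apply: connect_trans (IH _ _ _) _; [lia | lia | move=> t ht; apply: hA; lia |].
apply: connect1 => /=; rewrite hs ?eqxx //; try lia.
rewrite !hA //; lia.
Qed.

Lemma conn_sym (A : {set T}) a b : connect (er e A) a b -> connect (er e A) b a.
Proof. by rewrite (sym_connect_sym (er_sym esym A)). Qed.

Variables sP sQ : seq T.
Hypothesis hP : ipath sP.
Hypothesis hQ : ipath sQ.
Hypothesis PQ : forall z, z \in sP -> z \notin sQ.

Notation p t := (nth x0 sP t).
Notation q t := (nth x0 sQ t).

Lemma p_in t : t < size sP -> p t \in sP.
Proof. exact: mem_nth. Qed.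
Lemma q_in t : t < size sQ -> q t \in sQ.
Proof. exact: mem_nth. Qed.
Lemma p_idx t : t < size sP -> index (p t) sP = t.
Proof. by move=> h; rewrite index_uniq //; case: hP. Qed.
Lemma q_idx t : t < size sQ -> index (q t) sQ = t.
Proof. by move=> h; rewrite index_uniq //; case: hQ. Qed.
Lemma pq_neq t u : t < size sP -> u < size sQ -> p t != q u.
Proof.
move=> ht hu; apply/negP => /eqP h; have := PQ (p_in ht); by rewrite h q_in.
Qed.
Lemma pnotQ t : t < size sP -> (p t \in sQ) = false.
Proof. by move=> h; apply/negbTE/PQ/p_in. Qed.
Lemma qnotP u : u < size sQ -> (q u \in sP) = false.
Proof. by move=> h; apply/negbTE/negP => /PQ; rewrite q_in. Qed.
Lemma qp_neq t u : t < size sP -> u < size sQ -> q u != p t.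
Proof. by move=> ht hu; rewrite eq_sym pq_neq. Qed.
Lemma pp_neq t u : t < size sP -> u < size sP -> t != u -> p t != p u.
Proof.
move=> ht hu ntu; apply/negP => /eqP h.
by have := congr1 (fun z => index z sP) h; rewrite /= !p_idx //; apply/eqP.
Qed.
Lemma qq_neq t u : t < size sQ -> u < size sQ -> t != u -> q t != q u.
Proof.
move=> ht hu ntu; apply/negP => /eqP h.
by have := congr1 (fun z => index z sQ) h; rewrite /= !q_idx //; apply/eqP.
Qed.

Lemma walk (X : {set T}) i x : i < size sP -> x < size sQ -> e (p i) (q x) ->
  (forall t, t <= i -> p t \in X) -> (forall t, t <= x -> q t \in X) ->
  connect (er e X) (p 0) (q 0).
Proof.
move=> hi hx epq hpX hqX.
have h1 : connect (er e X) (p 0) (p i).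
  by apply: (seg_conn hP (i:=0) (k:=i)) => // t /andP [_ ht]; apply: hpX.
apply: connect_trans h1 _.
have h2 : connect (er e X) (p i) (q x) by apply: connect1; rewrite /= epq hpX // hqX.
have h3 : connect (er e X) (q 0) (q x).
  by apply: (seg_conn hQ (i:=0) (k:=x)) => // t /andP [_ ht]; apply: hqX.
exact: connect_trans h2 (conn_sym h3).
Qed.

Lemma lemL i k x y : i < k -> k < size sP -> x < y -> y < size sQ ->
  e (p i) (q x) -> e (p k) (q y) ->
  II f (p 0) (q 0) (p (size sP).-1) (q (size sQ).-1) = false.
Proof.
move=> ik ks xy ys e1 e2.
have is_ : i < size sP by lia.
have xs : x < size sQ by lia.
have E0 : II f (p i) (q x) (p k) (q y) = false.
  apply: (DP esym eirr finj NC (A := [set p i; q x])).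
    by apply: connect1; rewrite /= e1 !inE !eqxx orbT.
  apply: connect1; rewrite /= e2 !inE !negb_or.
  rewrite pp_neq ?pq_neq ?qp_neq ?qq_neq //; lia.
have E1 : II f (p 0) (p i) (p k) (q y) = false.
  apply: (DP esym eirr finj NC (A := [set z | (z \in sP) && (index z sP <= i)])).
    by apply: seg_conn => // t ht; rewrite inE p_in ?p_idx //; lia.
  apply: connect1; rewrite /= e2 !inE p_idx // qnotP //= andbT; apply/negP; lia.
have E2 : II f (q x) (q 0) (p k) (q y) = false.
  apply: (DP esym eirr finj NC (A := [set z | (z \in sQ) && (index z sQ <= x)])).
    by apply: conn_sym; apply: seg_conn => // t ht; rewrite inE q_in ?q_idx //; lia.
  apply: connect1; rewrite /= e2 !inE q_idx // pnotQ //= q_in //=; apply/negP; lia.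
have E12 : II f (p 0) (q 0) (p k) (q y) = false.
  by rewrite -(II_add1 _ (p 0) (q x)) -(II_add1 _ (p 0) (p i)) E0 E1 E2.
have E3 : II f (p 0) (q 0) (p (size sP).-1) (p k) = false.
  apply: (DP_r esym eirr finj NC (A := [set z | (z \in sP) && (k <= index z sP)])).
    apply: (walk (i := i) (x := x)) => // t ht; rewrite !inE.
      rewrite p_idx; [apply/negP; lia | lia].
    by rewrite qnotP //; lia.
  apply: conn_sym; apply: seg_conn => //; try lia.
  by move=> t ht; rewrite inE p_in ?p_idx //; lia.
have E4 : II f (p 0) (q 0) (q y) (q (size sQ).-1) = false.
  apply: (DP_r esym eirr finj NC (A := [set z | (z \in sQ) && (y <= index z sQ)])).
    apply: (walk (i := i) (x := x)) => // t ht; rewrite !inE.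
      by rewrite pnotQ //; lia.
    rewrite q_idx; [apply/negP; lia | lia].
  apply: seg_conn => //; try lia.
  by move=> t ht; rewrite inE q_in ?q_idx //; lia.
by rewrite -(II_add2 _ _ _ (p (size sP).-1) (q y)) -(II_add2 _ _ _ (p (size sP).-1) (p k)) E3 E12 E4.
Qed.

End Seqs.

Section Frontier.
Variable T : finType.
Variable e : rel T.
Hypothesis esym : symmetric e.
Hypothesis eirr : irreflexive e.
Variable x0 : T.

Lemma half (s1 s2 : seq T) (F : {set T}) : ipath e x0 s1 ->
  (forall z, (z \in s1) || (z \in s2)) -> fort e F ->
  nth x0 s1 0 \notin F -> has (mem F) s1 ->
  exists2 z, (z \in s2) && (z \in F) & e (nth x0 s1 (find (mem F) s1).-1) z.
Proof.
move=> [u1 h1] cov [_ hF] p0 hs.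
set i0 := find (mem F) s1.
have i0s : i0 < size s1 by rewrite /i0 -has_find.
have pi0 : nth x0 s1 i0 \in F by apply: (nth_find x0 hs).
have i0p : 0 < i0 by case: (posnP i0) => // h; rewrite h in pi0; rewrite pi0 in p0.
set v := nth x0 s1 i0.-1.
have vF : v \notin F by apply/negbT; apply: (before_find x0 (a := mem F)); lia.
set N := [set u in F | e v u].
have hN := hF v vF.
have piN : nth x0 s1 i0 \in N.
  by rewrite inE pi0 /v h1 //=; try lia; apply/orP; left; apply/eqP; lia.
have : 0 < #|N :\ nth x0 s1 i0|.
  have := cardsD1 (nth x0 s1 i0) N; rewrite piN => hc.
  move: hN; rewrite hc; case: #|N :\ nth x0 s1 i0| => //.
case/card_gt0P => z; rewrite !inE => /andP [zn /andP [zF evz]].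
exists z; last exact: evz.
rewrite zF andbT; case/orP: (cov z) => // zs1.
exfalso.
have tz := nth_index x0 zs1.
set t := index z s1 in tz.
have ts : t < size s1 by rewrite index_mem.
have ti : i0 <= t.
  case: (leqP i0 t) => // lt; have := before_find x0 lt; rewrite /= tz zF //.
have : e v z by [].
rewrite /v -tz h1 //; try lia.
case/orP => /eqP ht; last lia.
have ht' : t = i0 by lia.
by move: zn; rewrite -tz ht' eqxx.
Qed.

Lemma frontier (sP sQ : seq T) (F : {set T}) : ipath e x0 sP -> ipath e x0 sQ ->
  (forall z, (z \in sP) || (z \in sQ)) -> fort e F ->
  nth x0 sP 0 \notin F -> nth x0 sQ 0 \notin F ->
  exists i k j l, [/\ i < k < size sP, j < l < size sQ,
     e (nth x0 sP i) (nth x0 sQ l) & e (nth x0 sP k) (nth x0 sQ j)].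
Proof.
move=> hP hQ cov hF p0 q0.
have cov' : forall z, (z \in sQ) || (z \in sP) by move=> z; rewrite orbC.
have [hsP hsQ] : has (mem F) sP /\ has (mem F) sQ.
  case: (hF) => /set0Pn [z zF] _.
  have HP : has (mem F) sP -> has (mem F) sQ.
    move=> h; have [w /andP [w2 wF] _] := half hP cov hF p0 h.
    by apply/hasP; exists w.
  have HQ : has (mem F) sQ -> has (mem F) sP.
    move=> h; have [w /andP [w2 wF] _] := half hQ cov' hF q0 h.
    by apply/hasP; exists w.
  case/orP: (cov z) => zs.
    have h : has (mem F) sP by apply/hasP; exists z.
    by split => //; apply: HP.
  have h : has (mem F) sQ by apply/hasP; exists z.
  by split => //; apply: HQ.
have [z /andP [zQ zF] ez] := half hP cov hF p0 hsP.
have [w /andP [wP wF] ew] := half hQ cov' hF q0 hsQ.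
set i0 := find (mem F) sP in ez.
set j0 := find (mem F) sQ in ew.
have i0s : i0 < size sP by rewrite /i0 -has_find.
have j0s : j0 < size sQ by rewrite /j0 -has_find.
have i0p : 0 < i0.
  case: (posnP i0) => // h; have := nth_find x0 hsP; rewrite -/i0 h /=.
  by rewrite (negbTE p0).
have j0p : 0 < j0.
  case: (posnP j0) => // h; have := nth_find x0 hsQ; rewrite -/j0 h /=.
  by rewrite (negbTE q0).
have kge : i0 <= index w sP.
  case: (leqP i0 (index w sP)) => // lt; have := before_find x0 lt.
  by rewrite /= nth_index // wF.
have lge : j0 <= index z sQ.
  case: (leqP j0 (index z sQ)) => // lt; have := before_find x0 lt.
  by rewrite /= nth_index // zF.
exists i0.-1, (index w sP), j0.-1, (index z sQ); split.
- by rewrite index_mem wP andbT; lia.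
- by rewrite index_mem zQ andbT; lia.
- by rewrite nth_index.
- by rewrite nth_index // esym.
Qed.

End Frontier.


Lemma ipath_rev (T : finType) (e : rel T) x0 (s : seq T) :
  ipath e x0 s -> ipath e x0 (rev s).
Proof.
move=> [us h]; split; first by rewrite rev_uniq.
move=> i j; rewrite size_rev => hi hj; rewrite !nth_rev // h; try lia.
Qed.

Lemma ar1 n l : l < n -> n - (n - l.+1).+1 = l. Proof. lia. Qed.
Lemma ar2 n j l : j < l -> l < n -> n - l.+1 < n - j.+1. Proof. lia. Qed.
Lemma ar3 n j : j < n -> n - j.+1 < n. Proof. lia. Qed.
Lemma ar4 n : 0 < n -> n - n.-1.+1 = 0. Proof. lia. Qed.
Lemma ar5 n : 0 < n -> n - 1 = n.-1. Proof. lia. Qed.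
Lemma ar6 n : 0 < n -> n.-1 < n. Proof. lia. Qed.
Lemma ar7 i k m : i < k -> k < m -> 0 < m.-1. Proof. lia. Qed.

Section ZF2.
Variable T : finType.
Variable e : rel T.
Hypothesis esym : symmetric e.
Hypothesis eirr : irreflexive e.
Variable f : T -> nat.
Hypothesis finj : injective f.
Hypothesis NC : forall a b c d : T, e a b -> e c d -> ~ (f a < f c < f b /\ f b < f d).
Variable x0 : T.
Variables sP sQ : seq T.
Hypothesis hP : ipath e x0 sP.
Hypothesis hQ : ipath e x0 sQ.
Hypothesis PQ : forall z, z \in sP -> z \notin sQ.
Hypothesis cov : forall z, (z \in sP) || (z \in sQ).

Lemma zf2 : exists a b, forall F, fort e F -> (a \in F) || (b \in F).
Proof.
have hQ' := ipath_rev hQ.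
have PQ' : forall z, z \in sP -> z \notin rev sQ by move=> z; rewrite mem_rev; apply: PQ.
have cov' : forall z, (z \in sP) || (z \in rev sQ) by move=> z; rewrite mem_rev.
case: (classic (exists F, fort e F /\ nth x0 sP 0 \notin F /\ nth x0 sQ 0 \notin F))
  => [[F1 [hF1 [p1 q1]]] | H1]; last first.
  exists (nth x0 sP 0), (nth x0 sQ 0) => F hF.
  case: (boolP (nth x0 sP 0 \in F)) => //= a1; apply/negPn/negP => b1.
  by apply: H1; exists F.
exists (nth x0 sP 0), (nth x0 (rev sQ) 0) => F2 hF2.
case: (boolP (nth x0 sP 0 \in F2)) => //= a2; apply/negPn/negP => b2.
have [i [k [j [l [/andP [ik ks] /andP [jl ls] e1 e2]]]]] :=
  frontier esym hP hQ cov hF1 p1 q1.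
have [i' [k' [j' [l' [/andP [ik' ks'] /andP [jl' ls'] e1' e2']]]]] :=
  frontier esym hP hQ' cov' hF2 a2 b2.
rewrite size_rev in jl' ls'.
set n := size sQ in jl ls jl' ls'.
set m := size sP in ik ks ik' ks'.
have ln : l < n := ls.
have jn : j < n := ltn_trans jl ls.
have ln' : l' < n := ls'.
have jn' : j' < n := ltn_trans jl' ls'.
have n0 : 0 < n := leq_ltn_trans (leq0n j) jn.
have m0 : 0 < m := leq_ltn_trans (leq0n i) (ltn_trans ik ks).
have A1 : II f (nth x0 sP 0) (nth x0 (rev sQ) 0) (nth x0 sP m.-1)
             (nth x0 (rev sQ) (size (rev sQ)).-1) = false.
  apply: (lemL esym eirr finj NC hP hQ' PQ' (i := i) (k := k) (x := n - l.+1) (y := n - j.+1))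
    => //; rewrite ?size_rev -/n.
  - exact: ar2.
  - exact: ar3.
  - by rewrite nth_rev ?size_rev -/n ?ar1 // ar3.
  - by rewrite nth_rev ?size_rev -/n ?ar1 // ar3.
have A2 : II f (nth x0 sP 0) (nth x0 sQ 0) (nth x0 sP m.-1) (nth x0 sQ n.-1) = false.
  apply: (lemL esym eirr finj NC hP hQ PQ (i := i') (k := k') (x := n - l'.+1) (y := n - j'.+1))
    => //.
  - exact: ar2.
  - exact: ar3.
  - by move: e1'; rewrite nth_rev ?size_rev.
  - by move: e2'; rewrite nth_rev ?size_rev.
have r0 : nth x0 (rev sQ) 0 = nth x0 sQ n.-1.
  by rewrite nth_rev ?size_rev -/n ?ar5.
have rN : nth x0 (rev sQ) n.-1 = nth x0 sQ 0.
  by rewrite nth_rev ?size_rev -/n ?ar4 ?ar6.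
rewrite size_rev -/n r0 rN in A1.
have A3 : II f (nth x0 sP 0) (nth x0 sP m.-1) (nth x0 sQ 0) (nth x0 sQ n.-1) = false.
  apply: (DP esym eirr finj NC (A := [set z in sP])).
    apply: seg_conn => //; first exact: ar6.
    by move=> t /andP [_ ht]; rewrite inE mem_nth // (leq_ltn_trans ht (ar6 m0)).
  apply: seg_conn => //; first exact: ar6.
  move=> t /andP [_ ht]; rewrite !inE.
  by apply/negP => /PQ; rewrite mem_nth // (leq_ltn_trans ht (ar6 n0)).
have := @II_four _ f finj (nth x0 sP 0) (nth x0 sP m.-1) (nth x0 sQ 0) (nth x0 sQ n.-1).
rewrite A1 A2 A3 /=.
have nq : forall t u, t < m -> u < n -> nth x0 sP t != nth x0 sQ u.
  move=> t u ht hu; apply/negP => /eqP h; have := PQ (mem_nth x0 ht).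
  by rewrite h mem_nth.
have uq : uniq sQ by case: hQ.
rewrite !nq ?ar6 // nth_uniq ?ar6 //.
have nz : 0 != n.-1 by rewrite eq_sym -lt0n; apply: ar7 jl ls.
by move=> /(_ isT isT nz).
Qed.

End ZF2.

Lemma idx_rc (T : eqType) (s : seq T) w x : x \in s -> index x (rcons s w) = index x s.
Proof. by move=> h; rewrite -cats1 index_cat h. Qed.
Lemma idx_rcw (T : eqType) (s : seq T) w : w \notin s -> index w (rcons s w) = size s.
Proof. by move=> h; rewrite -cats1 index_cat (negbTE h) /= eqxx addn0. Qed.

Section Build.
Variable T : finType.
Variable e : rel T.
Hypothesis esym : symmetric e.
Hypothesis eirr : irreflexive e.
Variable g : T.
Hypothesis Hf : forall F, fort e F -> g \in F.

Definition Inv (s : seq T) (v : T) : Prop :=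
  [/\ uniq s, g \in s, v \in s /\ index v s = (size s).-1,
   (forall x y, x \in s -> y \in s ->
      e x y = (index y s == (index x s).+1) || (index x s == (index y s).+1)) &
   (forall x y, x \in s -> x != v -> e x y -> y \in s)].

Lemma inv0 : Inv [:: g] g.
Proof.
split => //=; first by rewrite inE.
  by rewrite inE eqxx.
  by move=> x y; rewrite !inE => /eqP -> /eqP ->; rewrite eirr eqxx.
by move=> x y; rewrite inE => /eqP ->; rewrite eqxx.
Qed.

Lemma inv_step s v : Inv s v -> (exists w0, w0 \notin s) ->
  exists w, w \notin s /\ Inv (rcons s w) w.
Proof.
move=> [us gs [vs iv] adj cl] [w0 w0s].
set F := [set x | x \notin s].
have : ~~ [forall u, (u \notin F) ==> (#|[set y in F | e u y]| != 1)].
  apply/negP => /forallP h.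
  have : g \in F.
    apply: Hf; split; first by apply/set0Pn; exists w0; rewrite inE.
    by move=> u hu; exact: (implyP (h u) hu).
  by rewrite inE gs.
case/forallPn => u; rewrite negb_imply negbK => /andP [uF c1].
have us' : u \in s by move: uF; rewrite inE negbK.
case/cards1P: c1 => w hw.
have : w \in [set y in F | e u y] by rewrite hw inE.
rewrite !inE => /andP [ws euw].
have uv : u = v.
  apply/eqP; apply/negPn/negP => nuv; have := cl u w us' nuv euw; by rewrite (negbTE ws).
subst u.
exists w; split => //.
have lastv : forall x, x \in s -> x != v -> (index x s).+1 < size s.
  move=> x xs nxv.
  have : index x s < size s by rewrite index_mem.
  have : index x s != index v s.
    by apply/negP => /eqP h; move: nxv; rewrite -(nth_index v xs) h nth_index // eqxx.
  rewrite iv; lia.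
split.
- by rewrite rcons_uniq ws.
- by rewrite mem_rcons inE gs orbT.
- by rewrite mem_rcons inE eqxx idx_rcw // size_rcons.
- have sp : 0 < size s by rewrite lt0n size_eq0; apply/eqP => h; rewrite h in vs.
  have key : forall z, z \in s -> e z w = (index w (rcons s w) == (index z (rcons s w)).+1)
        || (index z (rcons s w) == (index w (rcons s w)).+1).
    move=> z zs; rewrite idx_rcw // idx_rc //.
    case: (eqVneq z v) => [->|nzv].
      by rewrite euw iv prednK // eqxx.
    have ezw : e z w = false.
      by apply/negP => ez; have := cl z w zs nzv ez; rewrite (negbTE ws).
    rewrite ezw; have h := lastv z zs nzv; have h2 : index z s < size s by rewrite index_mem.
    have A : forall a b : nat, a.+1 < b -> (b == a.+1) || (a == b.+1) = false by move=> a b; lia.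
    by rewrite (A _ _ h).
  move=> x y; rewrite !mem_rcons !inE.
  move=> /orP [/eqP -> | xs] /orP [/eqP -> | ys].
  + have A : forall a : nat, (a == a.+1) || (a == a.+1) = false by move=> a; lia.
    by rewrite eirr A.
  + by rewrite esym key // orbC.
  + exact: key.
  + by rewrite !idx_rc //; apply: adj.
- move=> x y; rewrite !mem_rcons !inE => /orP [/eqP -> | xs]; first by rewrite eqxx.
  move=> nxw exy; apply/orP; case: (eqVneq x v) => [exv|nxv]; last by right; apply: cl exy.
  subst x; case: (boolP (y \in s)) => ys; first by right.
  left; have : y \in [set y in F | e v y] by rewrite !inE ys exy.
  by rewrite hw inE.
Qed.

Lemma build_all : exists s, uniq s /\ (forall x, x \in s) /\
  (forall x y, x \in s -> y \in s ->
      e x y = (index y s == (index x s).+1) || (index x s == (index y s).+1)).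
Proof.
suff : forall n s v, Inv s v -> #|T| - size s <= n -> exists s, uniq s /\ (forall x, x \in s) /\
  (forall x y, x \in s -> y \in s ->
      e x y = (index y s == (index x s).+1) || (index x s == (index y s).+1)).
  by move/(_ #|T| [:: g] g inv0); apply; lia.
elim=> [|n IH] s v hI hn; case: (boolP [forall x, x \in s]) => hall.
- by case: hI => us _ _ adj _; exists s; split => //; split => // x; exact: (forallP hall).
- case/forallPn: hall => w0 w0s; have [w [ws hI']] := inv_step hI (ex_intro _ w0 w0s).
  case: hI' => us' _ _ _ _.
  have := max_card (mem (rcons s w)); rewrite (card_uniqP us') size_rcons; lia.
- by case: hI => us _ _ adj _; exists s; split => //; split => // x; exact: (forallP hall).
- case/forallPn: hall => w0 w0s; have [w [ws hI']] := inv_step hI (ex_intro _ w0 w0s).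
  by apply: IH hI' _; rewrite size_rcons; lia.
Qed.

End Build.

Section Cover.
Variable T : finType.
Variable e : rel T.
Hypothesis esym : symmetric e.
Hypothesis eirr : irreflexive e.

Lemma seq_ipath (B : {set T}) (s : seq T) : uniq s -> (forall x, (x \in B) = (x \in s)) ->
  (forall x y, x \in s -> y \in s ->
      e x y = (index y s == (index x s).+1) || (index x s == (index y s).+1)) ->
  induced_path e B.
Proof.
move=> us hB adj.
have sz : size s == #|B|.
  rewrite -(card_uniqP us); apply/eqP; apply: eq_card => x; by rewrite hB.
apply/existsP; exists (Tuple sz) => /=; rewrite us /=; apply/andP; split.
  by apply/forallP => x; rewrite hB.
apply/forallP => x; apply/implyP => xs; apply/forallP => y; apply/implyP => ys.
by rewrite adj.
Qed.

Lemma sing_ipp : induced_path_partition e [set [set x] | x : T].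
Proof.
apply/andP; split.
  apply/and3P; split.
  - rewrite cover_imset; apply/eqP/setP => x; rewrite inE; apply/bigcupP.
    by exists x => //; rewrite inE.
  - apply/trivIsetP => A B /imsetP [a _ ->] /imsetP [b _ ->] nab.
    rewrite disjoints1 inE; apply/negP => /eqP h; by rewrite h eqxx in nab.
  - apply/negP => /imsetP [a _ h]; have : a \in [set a] by rewrite inE.
    by rewrite -h inE.
apply/forallP => B; apply/implyP => /imsetP [a _ ->].
apply: (@seq_ipath _ [:: a]) => //.
  by move=> x; rewrite !inE.
by move=> x y; rewrite !inE => /eqP -> /eqP ->; rewrite eirr /= eqxx.
Qed.

Lemma pcn_min (P : {set {set T}}) : induced_path_partition e P ->
  path_cover_number e <= #|P|.
Proof.
move=> hP; rewrite /path_cover_number.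
case: (arg_minnP (fun P : {set {set T}} => #|P|) sing_ipp) => Q _ hQ.
exact: hQ.
Qed.

Lemma pcn_spec : induced_path_partition e
  [arg min_(P < [set [set x] | x : T] | induced_path_partition e P) #|P|].
Proof. by case: (arg_minnP (fun P : {set {set T}} => #|P|) sing_ipp). Qed.

Lemma pcn2_notpath (g : T) : path_cover_number e = 2 -> ~ induced_path e [set: T].
Proof.
move=> h2 hp.
have : path_cover_number e <= #|[set [set: T]]|.
  apply: pcn_min; apply/andP; split.
    apply/and3P; split.
    - by rewrite cover1.
    - exact: trivIset1.
    - rewrite inE; apply/negP => /eqP h.
      have : g \in [set: T] by rewrite inE.
      by rewrite -h inE.
  by apply/forallP => B; apply/implyP; rewrite inE => /eqP ->.
by rewrite h2 cards1.
Qed.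

End Cover.


Section Graph2.
Variable T : finType.
Variable e : rel T.
Hypothesis esym : symmetric e.
Hypothesis eirr : irreflexive e.
Hypothesis h2 : path_cover_number e = 2.

Lemma fort_avoid (g : T) : exists A, fort e A /\ g \notin A.
Proof.
apply: NNPP => hn.
have Hf : forall F, fort e F -> g \in F.
  move=> F hF; apply/negPn/negP => gF; apply: hn; by exists F.
have [s [us [alls adj]]] := build_all esym eirr Hf.
apply: (pcn2_notpath eirr g h2).
by apply: (seq_ipath (s := s)) => // x; rewrite inE alls.
Qed.

Lemma ip_of (x0 : T) (B : {set T}) : induced_path e B ->
  exists s, ipath e x0 s /\ forall x, (x \in B) = (x \in s).
Proof.
case/existsP => t /and3P [ut /forallP hm /forallP ha].
exists t; split; last by move=> x; apply/eqP; apply: hm.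
split => // i j hi hj.
have xi : nth x0 t i \in t by apply: mem_nth.
have yj : nth x0 t j \in t by apply: mem_nth.
have := implyP (ha (nth x0 t i)) xi => /forallP /(_ (nth x0 t j)) /implyP /(_ yj) /eqP ->.
by rewrite !index_uniq.
Qed.

Lemma two_paths (x0 : T) : exists sP sQ, [/\ ipath e x0 sP, ipath e x0 sQ,
  (forall z, z \in sP -> z \notin sQ) & (forall z, (z \in sP) || (z \in sQ))].
Proof.
have hs := pcn_spec eirr.
move: h2; rewrite /path_cover_number => hc.
set P0 := [arg min_(P < _ | _) _] in hs hc.
have /cards2P [B1 [B2 [nB /= hP0]]] : #|P0| == 2 by rewrite hc.
case/andP: hs => /and3P [/eqP hcov htriv _] /forallP hip.
have ip1 : induced_path e B1 by apply: (implyP (hip B1)); rewrite hP0 !inE eqxx.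
have ip2 : induced_path e B2 by apply: (implyP (hip B2)); rewrite hP0 !inE eqxx orbT.
have [s1 [p1 m1]] := ip_of x0 ip1.
have [s2 [p2 m2]] := ip_of x0 ip2.
exists s1, s2; split => //.
  move=> z; rewrite -m1 -m2 => z1; apply/negP => z2.
  have : [disjoint B1 & B2].
    move/trivIsetP: htriv => ht.
    by apply: ht => //; rewrite ?hP0 ?inE ?eqxx ?orbT.
  by move/disjointFr => /(_ z z1); rewrite z2.
move=> z; rewrite -m1 -m2.
have : z \in cover P0 by rewrite hcov inE.
case/bigcupP => B; rewrite hP0 !inE => /orP [/eqP -> | /eqP ->] ->; by rewrite ?orbT.
Qed.

End Graph2.

Lemma dom_c (T : finType) (eH : rel T) : domination_number eH = 1 ->
  exists c, forall y, y != c -> eH c y.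
Proof.
rewrite /domination_number.
have Pi0 : dominating eH [set: T].
  by apply/eqP/setP => x; rewrite !inE.
case: (arg_minnP (fun S : {set T} => #|S|) Pi0) => S0 hS _ h1.
have /cards1P [c hc] : #|S0| == 1 by rewrite h1.
exists c => y nyc; move: hS; rewrite /dominating hc => /eqP /setP /(_ y).
rewrite !inE (negbTE nyc) /= => /existsP [z /andP [zc ezy]].
by move: zc ezy; rewrite inE => /eqP ->.
Qed.

Lemma fort_avoid_H (T : finType) (eH : rel T) (c : T) : symmetric eH -> irreflexive eH ->
  (forall y, y != c -> eH c y) -> 4 <= #|T| ->
  forall h, exists B, fort eH B /\ h \notin B.
Proof.
move=> sym irr hc n4 h.
case: (eqVneq h c) => [->|nhc].
  exists [set~ c]; split; last by rewrite !inE eqxx.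
  split; first by apply/eqP => h0; move: (cardsC1 c); rewrite h0 cards0; lia.
  move=> v; rewrite !inE negbK => /eqP ->.
  have -> : [set u in [set~ c] | eH c u] = [set~ c].
    apply/setP => u; rewrite !inE; case: (eqVneq u c) => //= nuc; by rewrite hc.
  rewrite cardsC1; lia.
case: (boolP [exists h', (h' != c) && eH h h']) => [/existsP [h' /andP [nh'c ehh']] | nex].
  exists [set~ h]; split; last by rewrite !inE eqxx.
  split; first by apply/eqP => h0; move: (cardsC1 h); rewrite h0 cards0; lia.
  move=> v; rewrite !inE negbK => /eqP ->.
  have sub : [set c; h'] \subset [set u in [set~ h] | eH h u].
    apply/subsetP => u; rewrite !inE => /orP [/eqP -> | /eqP ->].
      by rewrite eq_sym nhc sym hc.
    rewrite ehh' andbT; apply/negP => /eqP hh; by rewrite hh irr in ehh'.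
  have := subset_leq_card sub; rewrite cards2 eq_sym nh'c => hle.
  by apply/eqP => h1; rewrite h1 in hle.
exists [set u | (u != h) && (u != c)]; split; last by rewrite !inE eqxx.
have cB : #|[set u | (u != h) && (u != c)]| = #|T| - 2.
  have := cardsD1 c [set~ h]; rewrite cardsC1 !inE eq_sym nhc /=.
  have -> : [set~ h] :\ c = [set u | (u != h) && (u != c)].
    by apply/setP => u; rewrite !inE andbC.
  lia.
split; first by apply/eqP => h0; move: cB; rewrite h0 cards0; lia.
move=> v; rewrite !inE negb_and !negbK => /orP [/eqP -> | /eqP ->].
  have -> : [set u in [set u | (u != h) && (u != c)] | eH h u] = set0.
    apply/setP => u; rewrite !inE; apply/negP => /andP [/andP [_ nuc] ehu].
    by move/negP: nex; apply; apply/existsP; exists u; rewrite nuc ehu.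
  by rewrite cards0.
have -> : [set u in [set u | (u != h) && (u != c)] | eH c u] = [set u | (u != h) && (u != c)].
  apply/setP => u; rewrite !inE; case: (eqVneq u c) => nuc; rewrite ?andbF //= andbT.
  by case: (u != h); rewrite ?hc.
rewrite cB; lia.
Qed.

Theorem mainTheorem10 (T1 T2 : finType) (eG : rel T1) (eH : rel T2) :
  simple_graph eG -> connected_graph eG -> 4 <= #|T1| ->
  simple_graph eH -> connected_graph eH -> 4 <= #|T2| ->
  outerplanar eG -> path_cover_number eG = 2 -> domination_number eH = 1 ->
  power_domination_number (cart_prod eG eH) = 2.
Proof.
move=> [esG eiG] _ n1 [esH eiH] _ n2 [f [finj NC]] hpc hdom.
have [g0 _] : exists g : T1, g \in [set: T1].
  by apply/card_gt0P; rewrite cardsT; lia.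
have [h0 _] : exists h : T2, h \in [set: T2].
  by apply/card_gt0P; rewrite cardsT; lia.
have [c hc] := dom_c hdom.
set eP := cart_prod eG eH.
have low : forall S, power_dominating eP S -> 2 <= #|S|.
  move=> S hS; case: (ltnP #|S| 2) => // hlt; exfalso; move: hS.
  rewrite /power_dominating; apply/negP.
  case: (posnP #|S|) => [/cards0_eq -> | hpos].
    apply: (fort_cl (F := [set: T1 * T2])).
      split; first by apply/set0Pn; exists (g0, h0); rewrite inE.
      by move=> v; rewrite inE.
    move=> x _; rewrite /closed_nbhd inE in_set0 /=; apply/negP => /existsP [y].
    by rewrite in_set0.
  have /cards1P [[g h] ->] : #|S| == 1 by apply/eqP; lia.
  have [A [hA gA]] := fort_avoid esG eiG hpc g.
  have [B [hB hB']] := fort_avoid_H esH eiH hc n2 h.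
  apply: (fort_cl (F := setX A B)); first exact: prod_fort.
  move=> [x y]; rewrite !inE /= => /andP [xA yB].
  have nxg : (g == x) = false by apply/negP => /eqP h1; rewrite h1 xA in gA.
  have nyh : (h == y) = false by apply/negP => /eqP h1; rewrite h1 yB in hB'.
  rewrite negb_or; apply/andP; split.
    by apply/negP => /eqP [h1 _]; rewrite h1 eqxx in nxg.
  apply/negP => /existsP [z /andP [zS]]; rewrite inE in zS; move/eqP: zS => ->.
  by rewrite /eP /cart_prod /= nxg nyh.
have [sP [sQ [hP hQ PQ cov]]] := two_paths eiG hpc g0.
have [a [b hab]] := zf2 esG eiG finj NC hP hQ PQ cov.
set S := [set (a, c); (b, c)].
have pdS : power_dominating eP S.
  apply/negPn/negP => hn.
  have [F [hF dF]] := cl_fort hn.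
  have hZ : forall x y, x \in [set a; b] -> (x, y) \notin F.
    move=> x y xZ; apply/negP => xyF; have := dF _ xyF; apply/negP; rewrite negbK.
    rewrite inE; case: (eqVneq y c) => [->|nyc].
      by rewrite /S !inE; move: xZ; rewrite !inE => /orP [/eqP -> | /eqP ->]; rewrite eqxx ?orbT.
    apply/orP; right; apply/existsP; exists (x, c); rewrite /S !inE.
    rewrite /eP /cart_prod /= eqxx hc // andbT.
    by move: xZ; rewrite !inE => /orP [/eqP -> | /eqP ->]; rewrite eqxx ?orbT.
  have [A [hA dA]] := proj_fort hF hZ.
  have := hab A hA; case/orP => hin; have := dA _ hin; by rewrite !inE eqxx ?orbT.
rewrite /power_domination_number.
have Pi0 : power_dominating eP [set: T1 * T2].
  rewrite /power_dominating; apply/eqP; apply/eqP; rewrite eqEsubset subsetT /=.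
  have -> : closed_nbhd eP [set: T1 * T2] = [set: T1 * T2].
    by apply/setP => x; rewrite !inE.
  exact: iter_sub.
case: (arg_minnP (fun S : {set T1 * T2} => #|S|) Pi0) => S0 hS0 hmin.
apply/eqP; rewrite eqn_leq low // andbT.
apply: leq_trans (hmin S pdS) _.
by rewrite /S cards2; case: (_ != _).
Qed.
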